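(* Let $N\ge2$, $m>0$, $a_0>0$. For each large integer $K$ let $R>0$ be such that $d=2R\sin\frac\pi K$ satisfies $$a_0mR^{-m-1}=2\sin\frac{\pi}{K}\,\Psi(d),$$ and assume $d\to+\infty$ as $K\to\infty$. Then, as $K\to\infty$, $$d=m\ln K+\Big(m-\frac{N-3}{2}\Big)\ln(m\ln K)+O(1),$$ $$R=\frac{m}{2\pi}K\ln K+\frac{1}{2\pi}\Big(m-\frac{N-3}{2}\Big)K\ln(m\ln K)+O(K).$$
   Context: $w$ is the unique positive radial $H^1$ solution of $-\Delta w+w-w^p=0$ in $\mathbb{R}^N$ ($1<p$, $p<\frac{N+2}{N-2}$ if $N\ge3$), and $\Psi(s)=-\int_{\mathbb{R}^N}w(x-s\vec e)\,\mathrm{div}(w^p(x)\vec e)\,dx$ for a unit vector $\vec e$. One uses that $\Psi(s)=c_{N,p}s^{-\frac{N-1}{2}}e^{-s}(1+O(s^{-1}))$ as $s\to\infty$ for a constant $c_{N,p}>0$. *)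

(* Defs.v *)
From Stdlib Require Import Reals Lra.
Open Scope R_scope.

Definition Psi_asymp (N : nat) (Psi : R -> R) : Prop :=
  exists c : R, 0 < c /\
  exists C s0 : R, 0 < s0 /\
    forall s : R, s0 <= s ->
      Rabs (Psi s - c * Rpower s (- (INR N - 1) / 2) * exp (- s))
        <= C * (c * Rpower s (- (INR N - 1) / 2) * exp (- s)) / s.

Definition dK (Rs : nat -> R) (K : nat) : R := 2 * Rs K * sin (PI / INR K).

(* Main.v *)
Require Import Defs.
From Stdlib Require Import Reals Lra Lia.
Open Scope R_scope.
Lemma absle1 x a : Rabs x <= a -> -a <= x <= a.
Proof. unfold Rabs; destruct Rcase_abs; lra. Qed.
Lemma absle2 x a : -a <= x <= a -> Rabs x <= a.
Proof. unfold Rabs; destruct Rcase_abs; lra. Qed.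
Lemma ln_le' x y : 0 < x -> x <= y -> ln x <= ln y.
Proof. intros h1 h2. destruct (Req_dec x y) as [->|]; [lra|].
 left; apply ln_increasing; lra. Qed.
Lemma ln_lt_id y : 0 < y -> ln y < y.
Proof. intros h. rewrite <- (ln_exp y) at 2. apply ln_increasing; auto.
 pose proof (exp_ineq1_le y). lra. Qed.
Lemma ln_nonneg y : 1 <= y -> 0 <= ln y.
Proof. intros h. rewrite <- ln_1. apply ln_le'; lra. Qed.

Lemma dpart (a B0 d L : R) : 0 <= B0 -> 1 <= d -> 16*a^2 <= d -> 1 <= L -> 2*B0 <= L ->
  Rabs (d - a*ln d - L) <= B0 ->
  Rabs (d - (L + a * ln L)) <= B0 + Rabs a * (ln 3 + ln (2*(1+B0))).
Proof.
intros hB hd1 hd2 hL1 hL2 hE.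
apply absle1 in hE.
assert (hs0 : 0 < sqrt d) by (apply sqrt_lt_R0; lra).
assert (hss : sqrt d * sqrt d = d) by (apply sqrt_sqrt; lra).
assert (hlnd : ln d = 2 * ln (sqrt d)) by (rewrite <- hss at 1; rewrite ln_mult; lra).
assert (hls : ln (sqrt d) < sqrt d) by (apply ln_lt_id; lra).
assert (hln0 : 0 <= ln d) by (apply ln_nonneg; lra).
assert (ha2 : Rabs a ^ 2 = a ^ 2) by apply pow2_abs.
assert (ha0 : 0 <= Rabs a) by apply Rabs_pos.
assert (h4 : 4 * Rabs a <= sqrt d) by nra.
assert (hal : Rabs (a * ln d) <= d / 2).
{ rewrite Rabs_mult, (Rabs_right (ln d)) by lra. nra. }
apply absle1 in hal.
assert (hup : d <= 2*(1+B0) * L) by nra.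
assert (hlo : L <= 3 * d) by lra.
assert (hu' : ln d <= ln (2*(1+B0)) + ln L).
{ rewrite <- ln_mult by lra. apply ln_le'; lra. }
assert (hl' : ln L <= ln 3 + ln d).
{ rewrite <- ln_mult by lra. apply ln_le'; lra. }
assert (g1 : 0 <= ln 3) by (apply ln_nonneg; lra).
assert (g2 : 0 <= ln (2*(1+B0))) by (apply ln_nonneg; lra).
replace (d - (L + a * ln L)) with ((d - a*ln d - L) + a * (ln d - ln L)) by ring.
eapply Rle_trans; [apply Rabs_triang|].
apply Rplus_le_compat; [apply absle2; lra|].
rewrite Rabs_mult. apply Rmult_le_compat_l; [lra|]. apply absle2; lra.
Qed.
Lemma sin_low x : 0 <= x -> x <= PI -> x - x^3/6 <= sin x.
Proof. intros h1 h2. destruct (sin_bound x 0 h1 h2) as [H _].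
  unfold sin_approx, sin_term in H. simpl in H. lra. Qed.
Lemma sinfacts k : 2 <= k ->
  0 < sin (PI/k) /\ 1 <= k * sin (PI/k) /\ k * sin (PI/k) <= 4 /\
  0 <= 1/(2*sin (PI/k)) - k/(2*PI) <= 2/k.
Proof.
intros hk. pose proof PI_RGT_0. pose proof PI_4. pose proof PI2_3_2.
set (x := PI/k). set (s := sin x).
assert (hkx : k * x = PI) by (unfold x; field; lra).
assert (hx0 : 0 < x) by (unfold x; apply Rdiv_lt_0_compat; lra).
assert (hx2 : x <= 2) by nra.
assert (hsx : s < x) by (apply sin_lt_x; lra).
assert (hsl : x - x^3/6 <= s) by (apply sin_low; nra).
assert (hs3 : x/3 <= s) by nra.
assert (hs0 : 0 < s) by lra.
assert (hks : 1 <= k * s) by nra.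
assert (hks4 : k * s <= 4) by nra.
assert (hu : k * (x - s) <= k * (x^3/6)) by (apply Rmult_le_compat_l; lra).
assert (hdiff : 1/(2*s) - k/(2*PI) = (PI - k*s)/(2*PI*s)) by (field; lra).
repeat split; try lra.
- rewrite hdiff. unfold Rdiv; apply Rmult_le_pos; [nra| left; apply Rinv_0_lt_compat; nra].
- rewrite hdiff. apply (Rmult_le_reg_r (2*PI*s*k)); [nra|].
  replace ((PI - k * s) / (2 * PI * s) * (2 * PI * s * k)) with ((PI - k*s)*k) by (field; lra).
  replace (2 / k * (2 * PI * s * k)) with (4*PI*s) by (field; lra).
  assert (e : (PI - k*s)*k <= PI^2 * x / 6).
  { replace (PI - k*s) with (k*(x-s)) by lra.
    assert (ee : k * (x^3/6) * k = PI^2 * x / 6).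
    { assert (hp : PI^2 = (k*x)^2) by (rewrite hkx; ring). rewrite hp. field. }
    rewrite <- ee.
    apply Rmult_le_compat_r; lra. }
  nra.
Qed.

Theorem lemma3p3 (N : nat) (m a0 : R) (Psi : R -> R) (Rs : nat -> R) :
  (2 <= N)%nat -> 0 < m -> 0 < a0 ->
  Psi_asymp N Psi ->
  (exists K0 : nat, forall K : nat, (K0 <= K)%nat ->
     0 < Rs K /\
     a0 * m * Rpower (Rs K) (- m - 1) = 2 * sin (PI / INR K) * Psi (dK Rs K)) ->
  (forall M : R, exists K1 : nat, forall K : nat, (K1 <= K)%nat -> M < dK Rs K) ->
  exists (C : R) (K2 : nat), forall K : nat, (K2 <= K)%nat ->
    Rabs (dK Rs K - (m * ln (INR K)
            + (m - (INR N - 3) / 2) * ln (m * ln (INR K)))) <= C /\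
    Rabs (Rs K - (m / (2 * PI) * INR K * ln (INR K)
            + 1 / (2 * PI) * (m - (INR N - 3) / 2) * INR K * ln (m * ln (INR K))))
      <= C * INR K.
Proof.
intros HN hm ha0 [c [hc [Cp [s0 [hs0 HP]]]]] [K0 HK0] Hdiv.
set (al := m - (INR N - 3)/2).
set (B0 := Rabs (ln c) + ln 2 + Rabs (ln (a0*m)) + 8*m).
assert (hln2 : 0 <= ln 2) by (apply ln_nonneg; lra).
assert (hB0 : 0 <= B0) by (unfold B0; pose proof (Rabs_pos (ln c)); pose proof (Rabs_pos (ln (a0*m))); lra).
set (D := s0 + 2*Rabs Cp + 1 + 16*al^2).
destruct (Hdiv D) as [K1 HK1].
set (Lmin := 1 + 2*B0).
destruct (INR_unbounded (exp (Lmin/m))) as [K3 HK3].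
set (C1 := B0 + Rabs al * (ln 3 + ln (2*(1+B0)))).
assert (hC1 : 0 <= C1).
{ unfold C1. pose proof (Rabs_pos al).
  assert (0 <= ln 3) by (apply ln_nonneg; lra).
  assert (0 <= ln (2*(1+B0))) by (apply ln_nonneg; lra). nra. }
pose proof (Rabs_pos al) as hal0.
exists (C1 + 2*(1+Rabs al)*m), (K0+K1+K3+2)%nat.
intros K hK.
set (k := INR K).
assert (hk2 : 2 <= k).
{ unfold k. replace 2 with (INR 2) by (simpl; lra). apply le_INR. lia. }
assert (hk3 : exp (Lmin/m) < k).
{ unfold k. apply Rlt_le_trans with (INR K3); [lra|]. apply le_INR; lia. }
assert (hlnk : Lmin/m < ln k).
{ rewrite <- (ln_exp (Lmin/m)). apply ln_increasing; [apply exp_pos|lra]. }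
assert (hL : Lmin <= m * ln k).
{ apply Rlt_le. apply (Rmult_lt_reg_r (/m)); [apply Rinv_0_lt_compat; lra|].
  replace (m * ln k * / m) with (ln k) by (field; lra). exact hlnk. }
destruct (HK0 K ltac:(lia)) as [hR heq].
pose proof (HK1 K ltac:(lia)) as hd.
destruct (sinfacts k hk2) as [hs [hks [hks4 hdiff]]].
set (d := dK Rs K) in *.
set (s := sin (PI/k)) in *.
assert (hd_def : d = 2 * Rs K * s) by reflexivity.
assert (hal2 : 0 <= 16*al^2) by nra.
assert (hd1 : 1 <= d) by (pose proof (Rabs_pos Cp); unfold D in hd; lra).
assert (hd0 : 0 < d) by lra.
assert (hCp : 2 * Rabs Cp <= d) by (unfold D in hd; lra).
assert (hds0 : s0 <= d) by (pose proof (Rabs_pos Cp); unfold D in hd; lra).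
specialize (HP d hds0).
set (M := c * Rpower d (- (INR N - 1) / 2) * exp (- d)) in *.
assert (hM : 0 < M).
{ unfold M, Rpower. pose proof (exp_pos (- (INR N - 1) / 2 * ln d)). pose proof (exp_pos (-d)).
  apply Rmult_lt_0_compat; [apply Rmult_lt_0_compat|]; lra. }
assert (hCpM : Cp * M / d <= M / 2).
{ assert (Cp * M <= d/2 * M) by (pose proof (Rle_abs Cp); nra).
  apply (Rmult_le_reg_r d); [lra|].
  replace (Cp * M / d * d) with (Cp*M) by (field; lra). nra. }
apply absle1 in HP.
assert (hP1 : M/2 <= Psi d) by lra.
assert (hP2 : Psi d <= 2 * M) by lra.
assert (hPpos : 0 < Psi d) by lra.
assert (hlP1 : ln M - ln 2 <= ln (Psi d)).
{ replace (ln M - ln 2) with (ln (M / 2)).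
  - apply ln_le'; lra.
  - unfold Rdiv. rewrite ln_mult, ln_Rinv; lra. }
assert (hlP2 : ln (Psi d) <= ln 2 + ln M).
{ rewrite <- ln_mult by lra. apply ln_le'; lra. }
assert (hlM : ln M = ln c + (- (INR N - 1) / 2) * ln d + - d).
{ unfold M. rewrite ln_mult, ln_mult, ln_Rpower, ln_exp; try lra.
  - unfold Rpower; apply exp_pos.
  - apply Rmult_lt_0_compat; [lra|unfold Rpower; apply exp_pos].
  - apply exp_pos. }
assert (heql : ln (a0 * m) + (- m - 1) * ln (Rs K) = ln 2 + ln s + ln (Psi d)).
{ rewrite <- ln_Rpower, <- ln_mult, <- ln_mult, <- ln_mult; try lra.
  all: try (rewrite heq; reflexivity).
  all: try (unfold Rpower; apply exp_pos).
  all: try (apply Rmult_lt_0_compat; lra).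
  all: try nra.
  all: idtac. }
assert (hld : ln d = ln 2 + ln (Rs K) + ln s).
{ rewrite hd_def, ln_mult, ln_mult; lra. }
assert (hl2ks : ln (2 * (k * s)) = ln 2 + ln k + ln s).
{ rewrite ln_mult, ln_mult; lra. }
assert (hb2ks : 0 <= ln (2 * (k*s)) <= 8).
{ split; [apply ln_nonneg; lra|]. pose proof (ln_lt_id (2*(k*s))). lra. }
assert (hE : Rabs (d - al * ln d - m * ln k) <= B0).
{ assert (Eid : d - al * ln d - m * ln k =
     ln c + (ln (Psi d) - ln M) - ln (a0*m) - m * ln (2*(k*s))).
  { unfold al. rewrite hl2ks. rewrite hlM. rewrite hld. rewrite hld in hlM.
    lra. }
  rewrite Eid. apply absle2.
  pose proof (Rle_abs (ln c)). pose proof (Rle_abs (- ln c)). rewrite Rabs_Ropp in *.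
  pose proof (Rle_abs (ln (a0*m))). pose proof (Rle_abs (- ln (a0*m))). rewrite Rabs_Ropp in *.
  assert (0 <= m * ln (2*(k*s)) <= 8*m) by nra.
  unfold B0. lra. }
pose proof (dpart al B0 d (m * ln k) hB0 hd1 ltac:(unfold D in hd; pose proof (Rabs_pos Cp); lra)
   ltac:(unfold Lmin in hL; lra) ltac:(unfold Lmin in hL; lra) hE) as hD.
fold C1 in hD.
split.
- assert (0 <= 2*(1+Rabs al)*m) by nra. lra.
- set (L := m * ln k) in *.
  set (T := L + al * ln L) in *.
  assert (hRs : Rs K = d * (1/(2*s))) by (rewrite hd_def; field; lra).
  replace (m / (2 * PI) * k * ln k + 1 / (2 * PI) * al * k * ln L)
    with (k * T / (2*PI)) by (unfold T, L, al; field; pose proof PI_RGT_0; lra).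
  replace (Rs K - k * T / (2 * PI)) with
     ((d - T) * (1/(2*s)) + T * (1/(2*s) - k/(2*PI))) by (rewrite hRs; field; pose proof PI_RGT_0; lra).
  assert (hinv : 0 < 1/(2*s) <= k/2).
  { split. { unfold Rdiv; rewrite Rmult_1_l; apply Rinv_0_lt_compat; lra. }
    apply (Rmult_le_reg_r (2*s)); [lra|].
    replace (1/(2*s) * (2*s)) with 1 by (field; lra). nra. }
  assert (hL1 : 1 <= L) by (unfold Lmin in hL; lra).
  assert (hlnL : 0 <= ln L < L) by (split; [apply ln_nonneg; lra| apply ln_lt_id; lra]).
  assert (hlk : ln k < k) by (apply ln_lt_id; lra).
  assert (hLk : L <= m * k) by (unfold L; nra).
  assert (hT : Rabs T <= (1 + Rabs al) * (m * k)).
  { unfold T. eapply Rle_trans; [apply Rabs_triang|].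
    rewrite Rabs_mult, (Rabs_right L), (Rabs_right (ln L)) by lra. nra. }
  eapply Rle_trans; [apply Rabs_triang|].
  rewrite !Rabs_mult, (Rabs_right (1/(2*s))) by lra.
  rewrite (Rabs_right (1/(2*s) - k/(2*PI))) by lra.
  assert (h1 : Rabs (d - T) * (1/(2*s)) <= C1 * k).
  { pose proof (Rabs_pos (d-T)). nra. }
  assert (h2 : Rabs T * (1/(2*s) - k/(2*PI)) <= 2*(1+Rabs al)*m).
  { pose proof (Rabs_pos T).
    apply Rle_trans with ((1 + Rabs al) * (m * k) * (2/k)).
    - apply Rmult_le_compat; lra.
    - right. field. lra. }
  assert (h3 : 0 <= 2*(1+Rabs al)*m) by nra.
  assert (2*(1+Rabs al)*m <= 2*(1+Rabs al)*m*k) by (pose proof (Rmult_le_compat_l _ 1 k h3 ltac:(lra)); lra).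
  lra.
Qed.
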